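(* Let $\delta>0$ and let $O_2$ be an optimal solution of $I_2$ (assumed to exist). Then the optimal cost of the capacitated facility location instance $I_{cap}$ is at most $(1+2\delta)\,\mathrm{Cost}_{I_2}(O_2)$.
   Context: Let $\mathcal F^t$ be a finite set of points (facilities) in a metric space with metric $c$, $|\mathcal F^t|\ge2$, and let $n_i\ge1$ be an integer for each $i\in\mathcal F^t$ ($n_i$ clients are co-located at $i$); let $\mathcal L\ge1$ be an integer. The instance $I_2$ is the lower-bounded facility location instance with facility set $\mathcal F^t$, all opening costs $0$, the $\sum_in_i$ clients (those at $i$ located at $i$), and lower bound $\mathcal L$: a feasible solution opens a subset of $\mathcal F^t$ and assigns every client to an opened facility so that every opened facility receives at least $\mathcal L$ clients; its cost is the sum of client–facility distances. For $i\in\mathcal F^t$ let $l(i)=\min_{i'\in\mathcal F^t,i'\ne i}c(i,i')$. Call $i$ small if $n_i\le\mathcal L$ and big if $n_i>\mathcal L$. The capacitated facility location instance $I_{cap}$ is defined as follows: for small $i$ there is one facility at location $i$ with capacity $\mathcal L$ and opening cost $\delta n_il(i)$, and a demand of $\mathcal L-n_i$ units at $i$; for big $i$ there are two facilities at location $i$: $i_1$ with capacity $\mathcal L$ and opening cost $\delta\mathcal Ll(i)$, and $i_2$ with capacity $n_i-\mathcal L$ and opening cost $0$, and no demand at $i$. A feasible solution of $I_{cap}$ opens some of these facilities and assigns all demand units to opened facilities without exceeding capacities; its cost is the total opening cost plus the sum over demand units of the distance between the unit's location and its facility's location (co-located points have distance $0$). *)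

(* Defs.v *)
From HB Require Import structures.
From mathcomp Require Import all_boot all_order all_algebra.
Set Implicit Arguments. Unset Strict Implicit. Unset Printing Implicit Defensive.
Import Order.TTheory GRing.Theory Num.Theory.
Local Open Scope ring_scope.

Section LBFL.
Variables (R : realFieldType) (F : finType).

Definition is_metric (c : F -> F -> R) : Prop :=
  [/\ forall i j, 0 <= c i j,
      forall i j, (c i j == 0) = (i == j),
      forall i j, c i j = c j i &
      forall i j k, c i k <= c i j + c j k].

(* l(i) = min_{i' <> i} c(i,i') : c i applied to a minimizer of c i over F \ {i}
   (arg min picks such a minimizer whenever F \ {i} is nonempty). *)
Definition lmin (c : F -> F -> R) (i : F) : R :=
  c i [arg min_(j < i | j != i) c i j]%O.

Variable (n : F -> nat) (L : nat).

Definition client := {i : F & 'I_(n i)}.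
Definition client_loc (x : client) : F := tag x.

Definition I2_feasible (S : {set F}) (sigma : client -> F) : Prop :=
  (forall x, sigma x \in S) /\
  (forall j, j \in S -> (L <= #|[set x | sigma x == j]|)%N).

Definition I2_cost (c : F -> F -> R) (sigma : client -> F) : R :=
  \sum_(x : client) c (client_loc x) (sigma x).

Definition I2_optimal (c : F -> F -> R) (S : {set F}) (sigma : client -> F) : Prop :=
  I2_feasible S sigma /\
  forall S' sigma', I2_feasible S' sigma' -> I2_cost c sigma <= I2_cost c sigma'.

Definition small (i : F) : bool := (n i <= L)%N.
Definition big (i : F) : bool := (L < n i)%N.

(* facilities of I_cap: (i, false) is the facility at i for small i, and i_1
   for big i; (i, true) is i_2, which exists only for big i. *)
Definition capfac := {p : F * bool | p.2 ==> big p.1}.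
Definition capfac_loc (f : capfac) : F := (val f).1.

Definition capacity (f : capfac) : nat :=
  if (val f).2 then (n (val f).1 - L)%N else L.

Definition opencost (delta : R) (c : F -> F -> R) (f : capfac) : R :=
  let i := (val f).1 in
  if (val f).2 then 0
  else if small i then delta * (n i)%:R * lmin c i
  else delta * L%:R * lmin c i.

Definition demand (i : F) : nat := if small i then (L - n i)%N else 0%N.
Definition dunit := {i : F & 'I_(demand i)}.
Definition unit_loc (u : dunit) : F := tag u.

Definition Icap_feasible (T : {set capfac}) (tau : dunit -> capfac) : Prop :=
  (forall u, tau u \in T) /\
  (forall f, f \in T -> (#|[set u | tau u == f]| <= capacity f)%N).

Definition Icap_cost (delta : R) (c : F -> F -> R)
    (T : {set capfac}) (tau : dunit -> capfac) : R :=
  \sum_(f in T) opencost delta c f + \sum_(u : dunit) c (unit_loc u) (capfac_loc (tau u)).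

End LBFL.

(* Main.v *)
Require Import Defs.
From HB Require Import structures.
From mathcomp Require Import all_boot all_order all_algebra.
From mathcomp Require Import zify fingroup perm.
Import Order.TTheory GRing.Theory Num.Theory.
Set Implicit Arguments. Unset Strict Implicit. Unset Printing Implicit Defensive.

Lemma card_tag_pred (I : finType) (m : I -> nat) (i : I) (P : nat -> bool) :
  #|[set x : {j : I & 'I_(m j)} | (tag x == i) && P (tagged x)]| =
  #|[set k : 'I_(m i) | P k]|.
Proof.
have -> : [set x : {j : I & 'I_(m j)} | (tag x == i) && P (tagged x)] =
   (fun k => Tagged (fun j => 'I_(m j)) k) @: [set k : 'I_(m i) | P k].
  apply/setP => x; rewrite inE; apply/idP/imsetP.
    case: x => j k /= /andP[/eqP ej Pk]; subst j.
    by exists k; rewrite ?inE.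
  by case=> k; rewrite inE => Pk ->; rewrite /= eqxx.
apply: card_imset => k1 k2; exact: eq_from_Tagged.
Qed.

Lemma count_iota_geq L N : count (fun k => L <= k) (iota 0 N) = N - L.
Proof.
elim: N => [|N IH] //.
rewrite -addn1 iotaD count_cat IH /= add0n addn0.
case: leqP => h; lia.
Qed.

Lemma card_ord_pred N (P : nat -> bool) :
  #|[set k : 'I_N | P k]| = count P (iota 0 N).
Proof.
rewrite cardsE cardE /enum_mem size_filter -val_enum_ord count_map.
by rewrite enumT; apply: eq_count => k.
Qed.

Lemma card_ord_geq N L : #|[set k : 'I_N | L <= k]| = N - L.
Proof. by rewrite (card_ord_pred N (fun k => L <= k)) count_iota_geq. Qed.

Lemma card_ord_lt N L : #|[set k : 'I_N | k < L]| <= L.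
Proof.
rewrite (card_ord_pred N (fun k => k < L)).
have -> : count (fun k => k < L) (iota 0 N) = N - (N - L).
  rewrite -(count_iota_geq L N).
  have := count_predC (fun k => L <= k) (iota 0 N).
  rewrite size_iota.
  have -> : count (predC (fun k => L <= k)) (iota 0 N) = count (fun k => k < L) (iota 0 N).
    by apply: eq_count => k /=; rewrite -ltnNge.
  lia.
lia.
Qed.

Local Open Scope ring_scope.

Section Norm.
Variables (R : realFieldType) (F : finType) (c : F -> F -> R) (n : F -> nat) (L : nat).
Hypothesis Hm : is_metric c.

Lemma normalize (S : {set F}) (s : client n -> F) : I2_feasible L S s ->
  exists s' : client n -> F, [/\ I2_feasible L S s', I2_cost c s' <= I2_cost c s &
    forall x y, s' y = client_loc x -> s' x != client_loc x -> s' y = client_loc y].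
Proof.
move=> [Hs1 Hs2].
case: Hm => c0 c00 csym ctri.
pose P (g : {ffun client n -> F}) := [forall x, g x \in S] &&
   [forall j in S, (L <= #|[set x | g x == j]|)%N] && (I2_cost c g <= I2_cost c s).
pose nl (g : {ffun client n -> F}) := #|[set x | g x != client_loc x]|.
have P0 : P (finfun s).
  apply/andP; split; first (apply/andP; split).
  - by apply/forallP => x; rewrite ffunE.
  - apply/forall_inP => j jS.
    have -> : [set x | finfun s x == j] = [set x | s x == j].
      by apply/setP => x; rewrite !inE ffunE.
    exact: Hs2.
  - by rewrite /I2_cost; under eq_bigr do rewrite ffunE.
case: (arg_minnP nl P0) => g /andP[/andP[/forallP g1 /forall_inP g2] gc] gmin.
exists g; split => //.
move=> x y Hy Hx.
case: (g y =P client_loc y) => [//|/eqP Hy']; exfalso.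
have xy : x != y by apply/eqP => exy; subst y; by rewrite Hy eqxx in Hx.
pose t := tperm x y.
pose g' := finfun (fun z => g (t z)).
have g'x : g' x = client_loc x by rewrite ffunE tpermL.
have g'y : g' y = g x by rewrite ffunE tpermR.
have g'z z : z != x -> z != y -> g' z = g z by move=> zx zy; rewrite ffunE tpermD // eq_sym.
have Pg' : P g'.
  apply/andP; split; first (apply/andP; split).
  - by apply/forallP => z; rewrite ffunE.
  - apply/forall_inP => j jS.
    have -> : [set z | g' z == j] = t @^-1: [set z | g z == j].
      by apply/setP => z; rewrite !inE ffunE.
    by rewrite card_preimset ?g2 //; apply: perm_inj.
  - apply: le_trans gc.
    have yx : y != x by rewrite eq_sym.
    rewrite /I2_cost [X in X <= _](bigD1 x) // [X in _ <= X](bigD1 x) //=.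
    rewrite [in X in X <= _](bigD1 y) //= [in X in _ <= X](bigD1 y) //= !addrA.
have -> : \sum_(i | (i != x) && (i != y)) c (client_loc i) (g' i) =
              \sum_(i | (i != x) && (i != y)) c (client_loc i) (g i).
      by apply: eq_bigr => z /andP[zx zy]; rewrite g'z.
    rewrite lerD2r g'x g'y Hy.
    have -> : c (client_loc x) (client_loc x) = 0 by apply/eqP; rewrite c00.
    by rewrite add0r addrC ctri.
have := gmin g' Pg'; apply/negP; rewrite -ltnNge.
apply: proper_card; apply/properP; split.
  apply/subsetP => z; rewrite !inE.
  case: (eqVneq z x) => [->|zx]; first by rewrite g'x eqxx.
  case: (eqVneq z y) => [->|zy]; first by rewrite Hy'.
  by rewrite g'z.
by exists x; rewrite !inE ?g'x ?eqxx.
Qed.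
End Norm.

Lemma ext_indep (T : eqType) (I : finType) (ord : rel T) (P : pred I) (F : I -> T)
  (i0 j : I) : reflexive ord -> transitive ord -> total ord -> P j ->
  extremum ord i0 P F = extremum ord j P F.
Proof.
move=> r t tot Pj.
have H := @extremumP _ _ ord j P F r t tot Pj.
rewrite /extremum in H *; case: pickP H => [//|no_i] H.
exfalso; case: H => k Pk Hk /=.
move: (no_i k) => /=; rewrite Pk /=.
by move/negbT/negP; apply; apply/forall_inP => m Pm; apply: Hk.
Qed.

Lemma ext_min (T : eqType) (I : finType) (ord : rel T) (P : pred I) (F : I -> T)
  (i0 j : I) : reflexive ord -> transitive ord -> total ord -> P j ->
  forall m, P m -> ord (F (extremum ord i0 P F)) (F m).
Proof.
move=> r t tot Pj; rewrite (@ext_indep _ _ ord P F i0 j r t tot Pj).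
by case: (@extremumP _ _ ord j P F r t tot Pj) => k _ H.
Qed.

Lemma lmin_le (R : realFieldType) (F : finType) (c : F -> F -> R) (i j : F) :
  j != i -> lmin c i <= c i j.
Proof.
move=> ji; rewrite /lmin /Order.arg_min.
apply: (@ext_min _ _ _ (fun k => k != i) (fun k => c i k) i j) => //.
- exact: le_trans.
- exact: le_total.
Qed.

Lemma imp_andl a b : (a && b) ==> a. Proof. by case: a; case: b. Qed.

Lemma comb (x u a1 a2 d b cap : nat) : (x <= u -> u <= a1 + a2 -> a1 <= d -> a2 <= b ->
  d + b <= cap -> x <= cap)%N.
Proof. lia. Qed.

Section Cons.
Variables (R : realFieldType) (F : finType) (c : F -> F -> R) (n : F -> nat) (L : nat) (delta : R).
Hypothesis Hm : is_metric c.
Hypothesis Hn : forall i, (1 <= n i)%N.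
Hypothesis Hd : 0 <= delta.
Variables (S : {set F}) (g : client n -> F).
Hypothesis Hg1 : forall x, g x \in S.
Hypothesis Hg2 : forall j, j \in S -> (L <= #|[set x | g x == j]|)%N.
Hypothesis HP : forall x y, g y = client_loc x -> g x != client_loc x -> g y = client_loc y.

Local Notation client := (client n).
Local Notation dunit := (dunit n L).
Local Notation capfac := (capfac n L).

Definition inc (j : F) : {set client} := [set x | (g x == j) && (client_loc x != j)].
Definition dflt (j : F) : client := Tagged (fun i => 'I_(n i)) (Ordinal (Hn j)).
Definition phi (u : dunit) : client :=
  nth (dflt (unit_loc u)) (enum (inc (unit_loc u))) (tagged u).
Definition facx (x : client) : capfac :=
  exist _ (client_loc x, big n L (client_loc x) &&
           ((client_loc x \in S) || (L <= tagged x)%N)) (imp_andl _ _).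
Definition base (i : F) : capfac := exist _ (i, false) isT.
Definition tau (u : dunit) : capfac :=
  if unit_loc u \in S then facx (phi u) else base (unit_loc u).
Definition T : {set capfac} := [set f : capfac | (val f).2 || ((val f).1 \notin S)].

Lemma card_at i : #|[set x : client | client_loc x == i]| = n i.
Proof.
transitivity #|[set x : client | (tag x == i) && (fun _ => true) (tagged x)]|.
  by apply: eq_card => x; rewrite !inE andbT.
by rewrite (card_tag_pred n i (fun _ => true)); apply/eqP; rewrite -[X in _ == X](card_ord (n i)) -cardsT.
Qed.

Lemma card_units_at i : #|[set u : dunit | unit_loc u == i]| = demand n L i.
Proof.
transitivity #|[set x : dunit | (tag x == i) && (fun _ => true) (tagged x)]|.
  by apply: eq_card => x; rewrite !inE andbT.
by rewrite (card_tag_pred (demand n L) i (fun _ => true)); apply/eqP; rewrite -[X in _ == X](card_ord (demand n L i)) -cardsT.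
Qed.

Lemma inc_big j : j \in S -> (L - n j <= #|inc j|)%N.
Proof.
move=> jS; have := Hg2 jS.
have sub : [set x | g x == j] \subset [set x | client_loc x == j] :|: inc j.
  apply/subsetP => x; rewrite !inE => /eqP gx; rewrite gx eqxx /=.
  by case: eqP.
have := subset_leq_card sub; rewrite cardsU card_at; move=> h1 h2.
set a := #|[set x | g x == j]| in h1 h2; set b := #|inc j| in h1 *.
set d := #|_ :&: _| in h1; lia.
Qed.

Lemma out_bound i : i \in S ->
  (#|[set x : client | (client_loc x == i) && (g x != i)]| <= n i - L)%N.
Proof.
move=> iS.
case: (set_0Vmem [set x : client | (client_loc x == i) && (g x != i)]) => [->|[x]].
  by rewrite cards0.
rewrite inE => /andP[/eqP lx gx].
have sub : [set y | g y == i] \subset [set y : client | (client_loc y == i) && (g y == i)].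
  apply/subsetP => y; rewrite !inE => /eqP gy; rewrite gy eqxx andbT.
  by have := HP (x:=x) (y:=y); rewrite gy lx => /(_ erefl gx) <-.
have := subset_leq_card sub; have := Hg2 iS.
have := cardsID [set y : client | g y == i] [set y : client | client_loc y == i].
rewrite card_at.
have -> : [set y : client | client_loc y == i] :&: [set y | g y == i] =
          [set y : client | (client_loc y == i) && (g y == i)].
  by apply/setP => y; rewrite !inE.
have -> : [set y : client | client_loc y == i] :\: [set y | g y == i] =
          [set y : client | (client_loc y == i) && (g y != i)].
  by apply/setP => y; rewrite !inE andbC.
lia.
Qed.

Lemma sender_big (x : client) : g x != client_loc x -> client_loc x \in S -> big n L (client_loc x).
Proof.
move=> gx iS; have := out_bound iS.
have : (0 < #|[set y : client | (client_loc y == client_loc x) && (g y != client_loc x)]|)%N.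
  by apply/card_gt0P; exists x; rewrite inE eqxx gx.
rewrite /big; have := Hn (client_loc x); lia.
Qed.

Lemma phi_idx (u : dunit) : unit_loc u \in S -> (tagged u < size (enum (inc (unit_loc u))))%N.
Proof.
case: u => j k /= jS; rewrite -cardE.
have hk : (nat_of_ord k < demand n L j)%N := ltn_ord k.
have hd : (demand n L j <= L - n j)%N by rewrite /demand; case: ifP.
exact: leq_trans hk (leq_trans hd (inc_big jS)).
Qed.

Lemma phi_in (u : dunit) : unit_loc u \in S -> phi u \in inc (unit_loc u).
Proof.
move=> uS; rewrite /phi -mem_enum; exact: mem_nth (phi_idx uS).
Qed.

Lemma phi_g (u : dunit) : unit_loc u \in S -> g (phi u) = unit_loc u.
Proof. by move/phi_in; rewrite inE => /andP[/eqP]. Qed.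

Lemma phi_inj : {in [set u | unit_loc u \in S] &, injective phi}.
Proof.
move=> u1 u2; rewrite !inE => S1 S2 E.
have e : unit_loc u1 = unit_loc u2 by rewrite -(phi_g S1) -(phi_g S2) E.
have i1 := phi_idx S1; have i2 := phi_idx S2.
move: u1 u2 S1 S2 E e i1 i2 => [j1 k1] [j2 k2] /= S1 S2 E e; subst j2.
move=> i1 i2; move: E; rewrite /phi /= => /eqP.
rewrite nth_uniq ?enum_uniq // => /eqP kk.
by congr (existT _ _ _); apply: val_inj.
Qed.

Lemma tauT (u : dunit) : tau u \in T.
Proof.
rewrite /tau; case: ifP => jS; rewrite inE /=.
- have := phi_in jS; rewrite inE => /andP[/eqP gx lx].
  case: (boolP (client_loc (phi u) \in S)) => xS; last by rewrite orbT.
  have gx' : g (phi u) != client_loc (phi u) by rewrite gx eq_sym.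
  by rewrite (sender_big gx' xS).
- by rewrite jS.
Qed.

Lemma capT (f : capfac) : f \in T -> (#|[set u | tau u == f]| <= capacity f)%N.
Proof.
case: f => [[i b] hb]; rewrite inE /= => hT; rewrite /capacity /=.
set f := (exist _ (i, b) hb : capfac).
pose A1 := [set u : dunit | (unit_loc u \notin S) && (unit_loc u == i) && ~~ b].
pose A2 := [set u : dunit | (unit_loc u \in S) && (facx (phi u) == f)].
pose B := [set x : client | (client_loc x == i) && (g x != i) &&
   ((big n L i && ((i \in S) || (L <= tagged x)%N)) == b)].
have sub1 : [set u | tau u == f] \subset A1 :|: A2.
  apply/subsetP => u; rewrite !inE /tau; case: ifP => jS /=.
    by [].
  by rewrite -val_eqE /= xpair_eqE => /andP[-> /eqP <-].
have c2 : (#|A2| <= #|B|)%N.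
  rewrite -(@card_in_imset _ _ phi A2).
    apply: subset_leq_card; apply/subsetP => x /imsetP[u]; rewrite inE.
    move=> /andP[uS /eqP fu] ->.
    have := phi_in uS; rewrite inE => /andP[/eqP gx lx].
    move: fu => /(congr1 val) /= [li bi].
    by rewrite /B inE li eqxx /= gx -li eq_sym lx /= bi eqxx.
  move=> u1 u2; rewrite !inE => /andP[S1 _] /andP[S2 _]; apply: phi_inj; by rewrite inE.
have c1 : (#|A1| <= if b then 0 else demand n L i)%N.
  rewrite /A1; case: (b).
    rewrite leqn0 cards_eq0; apply/eqP/setP => u; by rewrite !inE andbF.
  rewrite -card_units_at; apply: subset_leq_card; apply/subsetP => u.
  by rewrite !inE => /andP[/andP[_ ->]].
have c0 := subset_leq_card sub1.
have cU := (leq_card_setU A1 A2).1.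
destruct b.
- have cB : (#|B| <= n i - L)%N.
    case: (boolP (i \in S)) => iS.
      apply: leq_trans (out_bound iS); apply: subset_leq_card; apply/subsetP => x.
      by rewrite !inE => /andP[/andP[-> ->]].
    rewrite -(card_ord_geq (n i) L) -(card_tag_pred n i (fun k => (L <= k)%N)).
    apply: subset_leq_card; apply/subsetP => x.
    rewrite !inE (negbTE iS) /= => /andP[/andP[/eqP <- _]].
    by rewrite eqxx /= => /eqP; case: (L <= tagged x)%N; rewrite ?andbF.
  by apply: (comb c0 cU c1 (leq_trans c2 cB)).
- have iS : i \notin S by [].
  move: c1 c2; rewrite /demand /small.
  case: (boolP (big n L i)) => bi.
    have -> : (n i <= L)%N = false by move: bi; rewrite /big; lia.
    have cB : (#|B| <= L)%N.
      apply: leq_trans (card_ord_lt (n i) L).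
      rewrite -(card_tag_pred n i (fun k => (k < L)%N)).
      apply: subset_leq_card; apply/subsetP => x.
      rewrite !inE (negbTE iS) bi /= => /andP[/andP[/eqP <- _]].
      by rewrite eqxx /= ltnNge; case: (L <= tagged x)%N.
    by move=> c1 c2; apply: (comb c0 cU c1 (leq_trans c2 cB)).
  have -> : (n i <= L)%N by move: bi; rewrite /big; lia.
  have cB : (#|B| <= n i)%N.
    rewrite -card_at; apply: subset_leq_card; apply/subsetP => x.
    by rewrite !inE => /andP[/andP[-> _]].
  move=> c1 c2; apply: (comb c0 cU c1 (leq_trans c2 cB)).
  by move: bi; rewrite /big; lia.
Qed.

Lemma cost_bound : Icap_cost delta c T tau <= (1 + delta) * I2_cost c g.
Proof.
case: Hm => c0 c00 csym ctri.
pose w x := c (client_loc x) (g x).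
have wge x : 0 <= delta * w x by rewrite mulr_ge0 // c0.
have ho : \sum_(f in T) opencost delta c f <= delta * I2_cost c g.
  apply: le_trans (_ : _ <= \sum_(f : capfac) \sum_(x : client)
    (if (client_loc x == (val f).1) && ~~ (val f).2 then delta * w x else 0)) _.
    rewrite big_mkcond /=; apply: ler_sum => -[[i b] hb] _.
    have rge : 0 <= \sum_(x : client)
      (if (client_loc x == (val (exist _ (i, b) hb : capfac)).1) &&
          ~~ (val (exist _ (i, b) hb : capfac)).2 then delta * w x else 0).
      by apply: sumr_ge0 => x _; case: ifP.
    case: ifP => fT; last exact: rge.
    rewrite /opencost /=; destruct b; first exact: rge.
    rewrite inE /= in fT.
    rewrite -big_mkcond /=.
    rewrite (eq_bigl (fun x => x \in [set x : client | client_loc x == i])); last first.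
      by move=> x; rewrite inE andbT.
    rewrite -mulr_sumr.
    have lge : 0 <= lmin c i by rewrite /lmin c0.
    have hl : (n i)%:R * lmin c i <= \sum_(x in [set x : client | client_loc x == i]) w x.
      rewrite mulr_natl.
      have -> : lmin c i *+ n i = \sum_(x in [set x : client | client_loc x == i]) lmin c i.
        by rewrite sumr_const card_at.
      apply: ler_sum => x; rewrite inE => /eqP lx; rewrite /w lx.
      apply: lmin_le; apply: contraNneq fT => <-; exact: Hg1.
    case: ifP => sm.
      by rewrite -mulrA; apply: ler_wpM2l.
    rewrite -mulrA; apply: ler_wpM2l => //; apply: le_trans hl.
    apply: ler_wpM2r => //; rewrite ler_nat; move: sm; rewrite /small; lia.
  rewrite exchange_big /= /I2_cost mulr_sumr; apply: ler_sum => x _.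
  rewrite -big_mkcond /=.
  have e : forall f : capfac,
      ((client_loc x == (val f).1) && ~~ (val f).2) = (f == base (client_loc x)).
    move=> -[[i b] hb]; rewrite -val_eqE /= xpair_eqE eq_sym.
    by case: (b); rewrite ?andbF ?andbT.
  by rewrite (eq_bigl _ _ e) big_pred1_eq.
have ha : \sum_u c (unit_loc u) (capfac_loc (tau u)) <= I2_cost c g.
  have e : forall u, c (unit_loc u) (capfac_loc (tau u)) =
                     if unit_loc u \in S then w (phi u) else 0.
    move=> u; rewrite /tau; case: ifP => uS.
      by rewrite /capfac_loc /facx /= /w (phi_g uS) csym.
    by rewrite /capfac_loc /base /=; apply/eqP; rewrite c00.
  rewrite (eq_bigr _ (fun u _ => e u)) -big_mkcond /=.
  rewrite (eq_bigl (fun u => u \in [set u : dunit | unit_loc u \in S])); last first.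
    by move=> u; rewrite inE.
  rewrite -(big_imset _ phi_inj) /I2_cost.
  rewrite [X in _ <= X](bigID (fun x => x \in phi @: [set u : dunit | unit_loc u \in S])) /=.
  by rewrite lerDl; apply: sumr_ge0 => x _; exact: c0.
by rewrite /Icap_cost mulrDl mul1r addrC; apply: lerD.
Qed.

End Cons.

Unset Implicit Arguments. Set Strict Implicit.

Theorem lemma4p1 (R : realFieldType) (F : finType) (c : F -> F -> R)
    (n : F -> nat) (L : nat) (delta : R)
    (S2 : {set F}) (sigma2 : client n -> F) :
  is_metric c ->
  (2 <= #|F|)%N ->
  (forall i, (1 <= n i)%N) ->
  (1 <= L)%N ->
  0 < delta ->
  I2_optimal L c S2 sigma2 ->
  exists (T : {set capfac n L}) (tau : dunit n L -> capfac n L),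
    Icap_feasible T tau /\
    Icap_cost delta c T tau <= (1 + 2 * delta) * I2_cost c sigma2.
Proof.
move=> Hm H2 Hn HL Hd [Hf _].
have [g [[g1 g2] gc gP]] := normalize Hm Hf.
have Hd' : 0 <= delta by exact: ltW.
exists (T n L S2), (tau Hn S2 g); split.
  split; first by move=> u; exact: (@tauT R _ _ _ delta Hn Hd' _ _ g2 gP u).
  by move=> f; exact: (@capT R _ _ _ delta Hn Hd' _ _ g2 gP f).
apply: le_trans (cost_bound Hm Hn Hd' g1 g2) _.
have c0 : 0 <= I2_cost c sigma2.
  by apply: sumr_ge0 => x _; case: Hm.
apply: le_trans (_ : _ <= (1 + delta) * I2_cost c sigma2) _.
  by apply: ler_wpM2l => //; rewrite addr_ge0.
apply: ler_wpM2r => //; rewrite lerD2l.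
by rewrite -[X in X <= _]mul1r ler_wpM2r // ler1n.
Qed.
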